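(* Let $\alpha,\beta,\gamma,\delta\in\mathbb{C}$ be parameters for which all gamma functions and hypergeometric functions below are well-defined, and let $f(z)=f(\alpha,\beta,\gamma,\delta;z)$ be defined for $z\in\mathbb{C}\setminus\{0\}$ by $$f(\alpha,\beta,\gamma,\delta;z)=\sum_{\nu=0}^{\infty}\frac{z^{-\nu}\Gamma(\alpha+\gamma+\nu)}{\nu!\,\Gamma(\beta+\nu)}\,E\left(\begin{matrix}\alpha+1,&\beta+\nu\\ \delta,&\beta+1+\nu\end{matrix};z\right).$$ Then for all $z\neq 0$, $$-z f'(z)+\beta f(z)=E(\alpha+1;\delta;z)\,E(\alpha+\gamma;\beta;-z).$$
   Context: For complex parameters $a_1,\dots,a_p$, $b_1,\dots,b_q$ with $p\le q$ and $z\in\mathbb{C}\setminus\{0\}$, the MacRobert $E$-function is $$E\left(\begin{matrix}a_1,\dots,a_p\\ b_1,\dots,b_q\end{matrix};z\right)=\frac{\prod_{j=1}^p\Gamma(a_j)}{\prod_{j=1}^q\Gamma(b_j)}\,{}_pF_q\left(\begin{matrix}a_1,\dots,a_p\\ b_1,\dots,b_q\end{matrix};-\frac1z\right),$$ where ${}_pF_q$ is the generalized hypergeometric function. In particular $E(a;b;z)=\frac{\Gamma(a)}{\Gamma(b)}M(a;b;-1/z)$ with $M={}_1F_1$ Kummer's function. *)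

(* Defs.v *)
From Stdlib Require Import Reals Arith Factorial List ClassicalEpsilon.
From Coquelicot Require Import Coquelicot.
Import ListNotations.
Open Scope C_scope.

Definition Cexp (z : C) : C :=
  RtoC (exp (Re z)) * (cos (Im z), sin (Im z)).

Definition Cpow_real (x : R) (z : C) : C := Cexp (z * RtoC (ln x)).

Fixpoint Cpown (z : C) (n : nat) : C :=
  match n with O => 1 | S m => z * Cpown z m end.

Fixpoint Cpoch (a : C) (n : nat) : C :=
  match n with O => 1 | S m => Cpoch a m * (a + RtoC (INR m)) end.

(* the limit of a complex sequence (arbitrary if it does not exist) *)
Definition Clim (u : nat -> C) : C :=
  epsilon (inhabits (RtoC 0)) (fun l => filterlim u eventually (locally l)).

(* the sum of a complex series (arbitrary if it does not converge) *)
Definition CSeries (u : nat -> C) : C :=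
  epsilon (inhabits (RtoC 0))
    (fun l => filterlim (fun N => sum_n u N) eventually (locally l)).

(* Euler's Gamma function via Gauss' product formula:
   Gamma(z) = lim_n n^z n! / (z (z+1) ... (z+n)),  z not in {0,-1,-2,...} *)
Definition CGamma (z : C) : C :=
  Clim (fun n => Cpow_real (INR n) z * RtoC (INR (fact n)) / Cpoch z (S n)).

Definition prodC (l : list C) : C := fold_right Cmult 1 l.

Definition hyp_term (a b : list C) (x : C) (n : nat) : C :=
  prodC (map (fun ai => Cpoch ai n) a) / prodC (map (fun bj => Cpoch bj n) b)
  * Cpown x n / RtoC (INR (fact n)).

Definition pFq (a b : list C) (x : C) : C := CSeries (hyp_term a b x).

Definition MacE (a b : list C) (z : C) : C :=
  prodC (map CGamma a) / prodC (map CGamma b) * pFq a b (- / z).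

(* z is not a pole of Gamma, i.e. z not in {0,-1,-2,...} *)
Definition not_npint (z : C) : Prop := forall n : nat, z <> - RtoC (INR n).

Definition fser (al be ga de z : C) : C :=
  CSeries (fun nu =>
    / Cpown z nu * CGamma (al + ga + RtoC (INR nu))
    / (RtoC (INR (fact nu)) * CGamma (be + RtoC (INR nu)))
    * MacE [al + 1; be + RtoC (INR nu)] [de; be + 1 + RtoC (INR nu)] z).

(* Main.v *)
Require Import Defs.
From Stdlib Require Import Reals List Lra Lia ClassicalEpsilon FunctionalExtensionality Factorial.
From Coquelicot Require Import Coquelicot.
Import ListNotations.

Open Scope R_scope.

Lemma sin_near0_pos (a : R) : 0 <= a <= 1 -> a - a^3/6 <= sin a <= a.
Proof.
  intros Ha. destruct (pre_sin_bound a 0 ltac:(lra) ltac:(lra)) as [H1 H2].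
  unfold sin_approx, sin_term in H1, H2. simpl in H1, H2.
  field_simplify in H1. field_simplify in H2.
  assert (0 <= a^3) by (apply pow_le; lra).
  assert (a^5 <= a^3) by (replace (a^5) with (a^3 * (a*a)) by ring; rewrite <- (Rmult_1_r (a^3)) at 2; apply Rmult_le_compat_l; nra).
  split; lra.
Qed.

Lemma pow3_le (t : R) : 0 <= t <= 1 -> 0 <= t^3 <= t^2.
Proof.
  intros H. assert (0 <= t*t) by nra.
  replace (t^3) with ((t*t)*t) by ring. replace (t^2) with ((t*t)*1) by ring.
  split; [nra|]. apply Rmult_le_compat_l; lra.
Qed.

Lemma sin_near0 (b : R) : Rabs b <= 1 -> Rabs (sin b - b) <= b^2 /\ Rabs (sin b) <= Rabs b.
Proof.
  intros Hb. destruct (Rle_dec 0 b) as [Hp|Hn].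
  - rewrite Rabs_pos_eq in Hb by lra. destruct (sin_near0_pos b) as [H1 H2]; [lra|].
    pose proof (pow3_le b ltac:(lra)).
    split; [rewrite Rabs_left1 by lra; lra|].
    pose proof PI2_3_2. pose proof (sin_ge_0 b ltac:(lra) ltac:(lra)).
    rewrite (Rabs_pos_eq b) by lra. apply Rabs_le. split; lra.
  - rewrite Rabs_left in Hb by lra. destruct (sin_near0_pos (-b)) as [H1 H2]; [lra|].
    rewrite sin_neg in H1, H2.
    pose proof (pow3_le (-b) ltac:(lra)). replace ((-b)^2) with (b^2) in * by ring.
    split; [rewrite Rabs_pos_eq by lra; lra|].
    pose proof PI2_3_2. pose proof (sin_ge_0 (-b) ltac:(lra) ltac:(lra)). rewrite sin_neg in *.
    rewrite (Rabs_left b) by lra. apply Rabs_le. split; lra.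
Qed.

Lemma cos_near0 (b : R) : Rabs b <= 1 -> 0 <= 1 - cos b <= b^2 / 2.
Proof.
  intros Hb. pose proof (COS_bound b).
  replace b with (2 * (b/2)) at 2 by field. rewrite cos_2a_sin.
  destruct (sin_near0 (b/2)) as [_ Hs]. { rewrite Rabs_div, (Rabs_pos_eq 2) by lra. lra. }
  split; [lra|].
  pose proof (Rmult_le_compat _ _ _ _ (Rabs_pos _) (Rabs_pos _) Hs Hs) as H1.
  rewrite <- !Rabs_mult in H1. rewrite !Rabs_pos_eq in H1 by nra. unfold Rsqr. nra.
Qed.

Lemma exp_near0 (a : R) : Rabs a <= 1/2 -> Rabs (exp a - 1 - a) <= 2 * a^2 /\ Rabs (exp a - 1) <= 2 * Rabs a.
Proof.
  intros Ha. pose proof (exp_ineq1_le a) as E1. pose proof (exp_ineq1_le (-a)) as E2.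
  assert (Hm : exp a * exp (-a) = 1) by (rewrite <- exp_plus; replace (a + - a) with 0 by ring; apply exp_0).
  apply Rabs_le_between in Ha.
  assert (Hpos : 0 < exp a) by apply exp_pos.
  assert (exp a * (1 - a) <= 1) by nra.
  assert (exp a - 1 - a <= 2 * a^2) by (simpl; nra).
  split.
  - rewrite Rabs_pos_eq by lra. exact H0.
  - apply Rabs_le. destruct (Rle_dec 0 a).
    + rewrite Rabs_pos_eq by lra. simpl in H0. split; nra.
    + rewrite Rabs_left by lra. simpl in H0. split; nra.
Qed.

Lemma ln_step (n : R) : 1 <= n -> / (n + 1) <= ln (n + 1) - ln n <= / n.
Proof.
  intros Hn.
  assert (E : ln (n+1) - ln n = ln (1 + / n)).
  { replace (n+1) with (n * (1 + / n)) by (field; lra). rewrite ln_mult. ring. lra.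
    assert (0 < / n) by (apply Rinv_0_lt_compat; lra). lra. }
  rewrite E. assert (0 < / n) by (apply Rinv_0_lt_compat; lra).
  split.
  - rewrite <- (ln_exp (/ (n+1))). apply ln_le. apply exp_pos.
    pose proof (exp_ineq1_le (- / (n+1))).
    assert (Hm : exp (/ (n+1)) * exp (- / (n+1)) = 1) by (rewrite <- exp_plus; replace (_ + - _) with 0 by ring; apply exp_0).
    assert (1 - / (n+1) = n / (n+1)) by (field; lra).
    assert (0 < exp (/ (n+1))) by apply exp_pos.
    assert (1 + / n = (n+1) / n) by (field; lra).
    rewrite H3. replace (1 + - / (n+1)) with (n / (n+1)) in H0 by (field; lra).
    apply (Rmult_le_reg_r (n / (n+1))). apply Rdiv_lt_0_compat; lra.
    replace ((n+1)/n * (n/(n+1))) with 1 by (field; lra). nra.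
  - rewrite <- (ln_exp (/ n)) at 2. apply ln_le. lra. apply exp_ineq1_le.
Qed.


Open Scope C_scope.

Lemma Cmod_le_sum (c : C) : (Cmod c <= Rabs (Re c) + Rabs (Im c))%R.
Proof.
  destruct c as [a b]. unfold Cmod, Re, Im; simpl.
  rewrite <- (sqrt_square (Rabs a + Rabs b)) by (pose proof (Rabs_pos a); pose proof (Rabs_pos b); lra).
  apply sqrt_le_1_alt.
  pose proof (Rabs_pos a); pose proof (Rabs_pos b).
  assert (a*a = Rabs a * Rabs a)%R by (rewrite <- Rabs_mult; rewrite Rabs_pos_eq; nra).
  assert (b*b = Rabs b * Rabs b)%R by (rewrite <- Rabs_mult; rewrite Rabs_pos_eq; nra).
  nra.
Qed.

Lemma Cexp_add (a b : C) : Cexp (a + b) = Cexp a * Cexp b.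
Proof.
  destruct a as [a1 a2], b as [b1 b2]. unfold Cexp. simpl.
  rewrite exp_plus, cos_plus, sin_plus.
  apply injective_projections; simpl; ring.
Qed.

Lemma Cexp_real (r : R) : Cexp (RtoC r) = RtoC (exp r).
Proof.
  unfold Cexp. simpl. rewrite cos_0, sin_0.
  apply injective_projections; simpl; ring.
Qed.

Lemma Cexp_nz (a : C) : Cexp a <> 0.
Proof.
  intro H. assert (Cmod (Cexp a) = 0%R) by (rewrite H; apply Cmod_0).
  unfold Cexp in H0. rewrite Cmod_mult, Cmod_R in H0.
  unfold Cmod in H0. simpl in H0.
  replace (cos (Im a) * (cos (Im a) * 1) + sin (Im a) * (sin (Im a) * 1))%R with 1%R in H0
    by (pose proof (sin2_cos2 (Im a)); unfold Rsqr in *; lra).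
  rewrite sqrt_1 in H0.
  rewrite Rabs_pos_eq in H0 by (apply Rlt_le, exp_pos). pose proof (exp_pos (Re a)). lra.
Qed.

Lemma im_le_Cmod' (c : C) : (Rabs (Im c) <= Cmod c)%R.
Proof.
  destruct c as [a b]. unfold Cmod; simpl. rewrite <- sqrt_Rsqr_abs. apply sqrt_le_1_alt.
  unfold Rsqr. nra.
Qed.

Lemma Cexp_bound (w : C) : (Cmod w <= 1/2)%R -> (Cmod (Cexp w - 1 - w) <= 8 * Cmod w ^ 2)%R.
Proof.
  intros Hw. destruct w as [a b].
  pose proof (re_le_Cmod (a,b)) as Ha. pose proof (im_le_Cmod' (a,b)) as Hb. simpl in Ha, Hb.
  eapply Rle_trans. apply Cmod_le_sum.
  replace (Re (Cexp (a, b) - 1 - (a, b))) with ((exp a - 1 - a) - exp a * (1 - cos b))%R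
    by (unfold Cexp; simpl; ring).
  replace (Im (Cexp (a, b) - 1 - (a, b))) with (exp a * (sin b - b) + (exp a - 1) * b)%R
    by (unfold Cexp; simpl; ring).
  destruct (exp_near0 a ltac:(lra)) as [E1 E2].
  destruct (sin_near0 b ltac:(lra)) as [S1 S2].
  destruct (cos_near0 b ltac:(lra)) as [C1 C2].
  set (m := Cmod (a,b)) in *.
  assert (Ea : (0 < exp a)%R) by apply exp_pos.
  assert (Ea2 : (exp a <= 2)%R) by (apply Rabs_le_between in E2; lra).
  assert (a^2 <= m^2)%R by (rewrite <- (pow2_abs a); apply pow_incr; split; [apply Rabs_pos|exact Ha]).
  assert (b^2 <= m^2)%R by (rewrite <- (pow2_abs b); apply pow_incr; split; [apply Rabs_pos|exact Hb]).
  assert (Rabs a * Rabs b <= m^2)%R by (simpl; apply Rmult_le_compat; try apply Rabs_pos; lra).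
  eapply Rle_trans. apply Rplus_le_compat; apply Rabs_triang.
  rewrite Rabs_Ropp, !Rabs_mult.
  rewrite (Rabs_pos_eq (exp a)) by lra. rewrite (Rabs_pos_eq (1 - cos b)) by lra.
  assert (exp a * (1 - cos b) <= 2 * (b^2/2))%R by (apply Rmult_le_compat; lra).
  assert (exp a * Rabs (sin b - b) <= 2 * b^2)%R by (apply Rmult_le_compat; try lra; apply Rabs_pos).
  assert (Rabs (exp a - 1) * Rabs b <= 2 * Rabs a * Rabs b)%R by (apply Rmult_le_compat_r; [apply Rabs_pos|lra]).
  lra.
Qed.


Open Scope C_scope.

Lemma C_eps_lim (u : nat -> C) (L : C) :
  (forall eps : R, (0 < eps)%R -> exists N, forall n, (N <= n)%nat -> (Cmod (u n - L) < eps)%R) ->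
  filterlim u eventually (locally L).
Proof.
  intros H. apply filterlim_locally. intros eps.
  destruct (H eps (cond_pos eps)) as [N HN]. exists N. intros n Hn.
  apply (norm_compat1 (K:=C_AbsRing) (V:=C_NormedModule)). apply HN. exact Hn.
Qed.

Lemma Clim_correct (u : nat -> C) (l : C) : filterlim u eventually (locally l) -> Clim u = l.
Proof.
  intros H. unfold Clim.
  assert (E : exists l', filterlim u eventually (locally l')) by (exists l; exact H).
  apply (filterlim_locally_unique (F := eventually) u).
  apply epsilon_spec. exact E. exact H.
Qed.

Lemma Re_minus (x y : C) : Re (x - y) = (Re x - Re y)%R.
Proof. destruct x, y. unfold Re, Cminus, Cplus, Copp; simpl. ring. Qed.
Lemma Im_minus (x y : C) : Im (x - y) = (Im x - Im y)%R.
Proof. destruct x, y. unfold Im, Cminus, Cplus, Copp; simpl. ring. Qed.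

Lemma C_cauchy (u : nat -> C) :
  (forall eps : R, (0 < eps)%R -> exists N, forall n m, (N <= n)%nat -> (N <= m)%nat -> (Cmod (u n - u m) < eps)%R) ->
  exists L, filterlim u eventually (locally L).
Proof.
  intros H.
  assert (C1 : Cauchy_crit (fun n => Re (u n))).
  { intros eps Heps. destruct (H eps Heps) as [N HN]. exists N. intros n m Hn Hm.
    unfold Rdist. eapply Rle_lt_trans; [|apply (HN n m Hn Hm)].
    rewrite <- Re_minus. apply re_le_Cmod. }
  assert (C2 : Cauchy_crit (fun n => Im (u n))).
  { intros eps Heps. destruct (H eps Heps) as [N HN]. exists N. intros n m Hn Hm.
    unfold Rdist. eapply Rle_lt_trans; [|apply (HN n m Hn Hm)].
    rewrite <- Im_minus. apply im_le_Cmod'. }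
  destruct (Rcomplete.R_complete _ C1) as [l1 H1].
  destruct (Rcomplete.R_complete _ C2) as [l2 H2].
  exists (l1, l2). apply C_eps_lim. intros eps Heps.
  destruct (H1 (eps/2)%R ltac:(lra)) as [N1 HN1]. destruct (H2 (eps/2)%R ltac:(lra)) as [N2 HN2].
  exists (N1 + N2)%nat. intros n Hn.
  eapply Rle_lt_trans. apply Cmod_le_sum.
  specialize (HN1 n ltac:(lia)). specialize (HN2 n ltac:(lia)). unfold Rdist in *.
  rewrite Re_minus.
  rewrite Im_minus. simpl. lra.
Qed.

Fixpoint ps (g : nat -> R) (k : nat) : R :=
  match k with O => 0%R | S k => (ps g k + g k)%R end.

Lemma ps_sum (g : nat -> R) (k : nat) : ps g (S k) = sum_n g k.
Proof.
  induction k. simpl. rewrite sum_O. ring.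
  simpl in *. rewrite sum_Sn, <- IHk. simpl. reflexivity.
Qed.

Lemma ps_mono (g : nat -> R) (k j : nat) : (forall i, 0 <= g i)%R -> (ps g k <= ps g (k + j))%R.
Proof.
  intros Hg. induction j. rewrite Nat.add_0_r. lra.
  rewrite Nat.add_succ_r. simpl. specialize (Hg (k+j)%nat). lra.
Qed.

Lemma exp_sub1 (t : R) : (0 <= t <= 1/2)%R -> (exp t - 1 <= 2 * t)%R.
Proof.
  intros Ht. assert (Rabs t <= 1/2)%R by (rewrite Rabs_pos_eq; lra).
  destruct (exp_near0 t H) as [_ E].
  rewrite (Rabs_pos_eq t) in E by lra. apply Rabs_le_between in E. lra.
Qed.

Lemma exp_mono (a b : R) : (a <= b)%R -> (exp a <= exp b)%R.
Proof. intros H. destruct H. left. apply exp_increasing. exact H. subst. lra. Qed.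

Lemma prod_conv (p u : nat -> C) (N : nat) :
  (forall n, (N <= n)%nat -> p (S n) = p n * (1 + u n)) ->
  ex_series (fun n => Cmod (u n)) ->
  exists L, filterlim p eventually (locally L).
Proof.
  intros Hp Hu.
  set (g := fun i => Cmod (u (N + i)%nat)).
  assert (Hg0 : forall i, (0 <= g i)%R) by (intro; apply Cmod_ge_0).
  assert (Eg : ex_series g) by (apply (ex_series_incr_n (fun n => Cmod (u n)) N); exact Hu).
  set (SG := Series g).
  assert (Lg : is_lim_seq (ps g) SG).
  { apply is_lim_seq_incr_1. eapply is_lim_seq_ext. intro k. symmetry. apply ps_sum.
    apply (Series_correct g Eg). }
  assert (Hle : forall k, (ps g k <= SG)%R).
  { apply is_lim_seq_incr_compare. exact Lg. intro k. simpl. specialize (Hg0 k). lra. }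
  set (q := fun k => p (N + k)%nat).
  assert (Hq : forall k, q (S k) = q k * (1 + u (N + k)%nat)).
  { intro k. unfold q. rewrite Nat.add_succ_r. apply Hp. lia. }
  assert (I1 : forall k, (Cmod (q k) <= Cmod (q 0%nat) * exp (ps g k))%R).
  { induction k. simpl. rewrite exp_0. lra.
    rewrite Hq, Cmod_mult. simpl ps. rewrite exp_plus.
    assert (Cmod (1 + u (N + k)%nat) <= exp (g k))%R.
    { eapply Rle_trans. apply Cmod_triangle. rewrite Cmod_1. unfold g.
      pose proof (exp_ineq1_le (Cmod (u (N + k)%nat))). lra. }
    pose proof (Cmod_ge_0 (q k)). pose proof (Cmod_ge_0 (1 + u (N + k)%nat)).
    pose proof (exp_pos (ps g k)). pose proof (Cmod_ge_0 (q 0%nat)).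
    replace (Cmod (q 0%nat) * (exp (ps g k) * exp (g k)))%R with ((Cmod (q 0%nat) * exp (ps g k)) * exp (g k))%R by ring.
    apply Rmult_le_compat; lra. }
  assert (I2 : forall k j, (Cmod (q (k + j)%nat - q k) <= Cmod (q k) * (exp (ps g (k + j) - ps g k) - 1))%R).
  { intros k j. induction j.
    - rewrite Nat.add_0_r. replace (q k - q k) with (RtoC 0) by ring. rewrite Cmod_0.
      replace (ps g k - ps g k)%R with 0%R by ring. rewrite exp_0. lra.
    - rewrite Nat.add_succ_r, Hq. simpl ps.
      replace (q (k + j)%nat * (1 + u (N + (k + j))%nat) - q k)
        with ((q (k + j)%nat - q k) * (1 + u (N + (k + j))%nat) + q k * u (N + (k + j))%nat) by ring.
      eapply Rle_trans. apply Cmod_triangle. rewrite !Cmod_mult.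
      assert (Cmod (1 + u (N + (k + j))%nat) <= 1 + g (k + j)%nat)%R.
      { eapply Rle_trans. apply Cmod_triangle. rewrite Cmod_1. unfold g. lra. }
      fold (g (k+j)%nat).
      set (E := exp (ps g (k + j) - ps g k)) in *.
      assert (E1 : (1 <= E)%R).
      { unfold E. pose proof (ps_mono g k j Hg0). pose proof (exp_ineq1_le (ps g (k + j) - ps g k)). lra. }
      replace (ps g (k + j) + g (k + j)%nat - ps g k)%R with ((ps g (k + j) - ps g k) + g (k+j)%nat)%R by ring.
      rewrite exp_plus. fold E.
      pose proof (exp_ineq1_le (g (k + j)%nat)).
      pose proof (Cmod_ge_0 (q k)). pose proof (Hg0 (k+j)%nat).
      pose proof (Cmod_ge_0 (q (k + j)%nat - q k)).
      assert (Cmod (q (k + j)%nat - q k) * Cmod (1 + u (N + (k + j))%nat) <= Cmod (q k) * (E - 1) * (1 + g (k + j)%nat))%R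
        by (apply Rmult_le_compat; [apply Cmod_ge_0|apply Cmod_ge_0|exact IHj|exact H]).
      assert (Cmod (q k) * (E * (1 + g (k+j)%nat)) <= Cmod (q k) * (E * exp (g (k + j)%nat)))%R
        by (apply Rmult_le_compat_l; [lra|]; apply Rmult_le_compat_l; lra).
      unfold g in *. nra. }
  set (B := (Cmod (q 0%nat) * exp SG)%R).
  assert (HB : (0 <= B)%R) by (unfold B; pose proof (Cmod_ge_0 (q 0%nat)); pose proof (exp_pos SG); nra).
  assert (I3 : forall k j, (SG - ps g k <= 1/2)%R -> (Cmod (q (k + j)%nat - q k) <= 2 * B * (SG - ps g k))%R).
  { intros k j Hk. eapply Rle_trans. apply I2.
    pose proof (Hle (k + j)%nat). pose proof (Hle k).
    assert (X1 : (exp (ps g (k + j) - ps g k) - 1 <= 2 * (SG - ps g k))%R).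
    { eapply Rle_trans; [|apply exp_sub1; lra].
      assert (exp (ps g (k + j) - ps g k) <= exp (SG - ps g k))%R by (apply exp_mono; lra).
      lra. }
    assert (X2 : (0 <= exp (ps g (k + j) - ps g k) - 1)%R).
    { pose proof (ps_mono g k j Hg0). pose proof (exp_ineq1_le (ps g (k + j) - ps g k)). lra. }
    assert (X3 : (Cmod (q k) <= B)%R).
    { eapply Rle_trans. apply I1. unfold B. apply Rmult_le_compat_l. apply Cmod_ge_0. apply exp_mono. apply Hle. }
    pose proof (Cmod_ge_0 (q k)).
    replace (2 * B * (SG - ps g k))%R with (B * (2 * (SG - ps g k)))%R by ring.
    apply Rmult_le_compat; lra. }
  assert (Lim2 : forall e, (0 < e)%R -> exists K, forall k, (K <= k)%nat -> (SG - ps g k < e)%R).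
  { intros e He. apply is_lim_seq_Reals in Lg. destruct (Lg e He) as [K HK]. exists K. intros k Hk.
    specialize (HK k Hk). unfold Rdist in HK. apply Rabs_lt_between in HK. lra. }
  apply C_cauchy. intros eps Heps.
  destruct (Lim2 (Rmin (1/2) (eps / (4 * B + 1))) ltac:(apply Rmin_pos; [lra|apply Rdiv_lt_0_compat; lra])) as [K HK].
  exists (N + K)%nat. intros n m Hn Hm.
  specialize (HK K (le_n K)).
  pose proof (Rmin_l (1/2) (eps / (4 * B + 1))). pose proof (Rmin_r (1/2) (eps / (4 * B + 1))).
  assert (HKb : (2 * B * (SG - ps g K) < eps / 2)%R).
  { assert (SG - ps g K < eps / (4*B+1))%R by lra.
    pose proof (Hle K).
    assert ((4*B+1) * (SG - ps g K) < eps)%R.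
    { apply (Rmult_lt_compat_l (4*B+1)) in H1; [|lra]. replace ((4*B+1) * (eps / (4*B+1)))%R with eps in H1 by (field; lra). lra. }
    nra. }
  assert (Hn' : p n = q (K + (n - N - K))%nat) by (unfold q; f_equal; lia).
  assert (Hm' : p m = q (K + (m - N - K))%nat) by (unfold q; f_equal; lia).
  rewrite Hn', Hm'.
  replace (q (K + (n - N - K))%nat - q (K + (m - N - K))%nat)
    with ((q (K + (n - N - K))%nat - q K) - (q (K + (m - N - K))%nat - q K)) by ring.
  eapply Rle_lt_trans. unfold Cminus at 1. apply Cmod_triangle. rewrite Cmod_opp.
  pose proof (I3 K (n - N - K)%nat ltac:(lra)). pose proof (I3 K (m - N - K)%nat ltac:(lra)).
  lra.
Qed.


Open Scope C_scope.

Lemma nat_above (A : R) : exists n : nat, (A < INR n)%R.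
Proof.
  destruct (Rle_dec 0 A).
  - destruct (nfloor_ex A r) as [n Hn]. exists (S n). rewrite S_INR. lra.
  - exists 0%nat. simpl. lra.
Qed.

Lemma C_lim_eps (u : nat -> C) (L : C) : filterlim u eventually (locally L) ->
  forall eps : R, (0 < eps)%R -> exists N, forall n, (N <= n)%nat -> (Cmod (u n - L) < eps)%R.
Proof.
  intros H eps Heps.
  assert (S2 : (0 < sqrt 2)%R) by (apply sqrt_lt_R0; lra).
  assert (He : (0 < eps / sqrt 2)%R) by (apply Rdiv_lt_0_compat; lra).
  apply filterlim_locally with (eps := mkposreal _ He) in H.
  destruct H as [N HN]. exists N. intros n Hn. specialize (HN n Hn).
  apply (C_NormedModule_mixin_compat2 L (u n) (mkposreal _ He)) in HN. simpl in HN.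
  replace (sqrt 2 * (eps / sqrt 2))%R with eps in HN by (field; lra). exact HN.
Qed.

Lemma C_lim_mult (u v : nat -> C) (l m : C) :
  filterlim u eventually (locally l) -> filterlim v eventually (locally m) ->
  filterlim (fun n => u n * v n) eventually (locally (l * m)).
Proof.
  intros Hu Hv. apply C_eps_lim. intros eps Heps.
  set (e := Rmin 1 (eps / (2 * (Cmod m + Cmod l + 1)))).
  assert (Hp : (0 < Cmod m + Cmod l + 1)%R) by (pose proof (Cmod_ge_0 m); pose proof (Cmod_ge_0 l); lra).
  assert (He : (0 < e)%R) by (apply Rmin_pos; [lra|apply Rdiv_lt_0_compat; lra]).
  destruct (C_lim_eps u l Hu e He) as [N1 H1]. destruct (C_lim_eps v m Hv e He) as [N2 H2].
  exists (N1 + N2)%nat. intros n Hn. specialize (H1 n ltac:(lia)). specialize (H2 n ltac:(lia)).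
  replace (u n * v n - l * m) with ((u n - l) * v n + l * (v n - m)) by ring.
  eapply Rle_lt_trans. apply Cmod_triangle. rewrite !Cmod_mult.
  assert (Hv' : (Cmod (v n) <= Cmod m + 1)%R).
  { replace (v n) with ((v n - m) + m) by ring. eapply Rle_trans. apply Cmod_triangle.
    pose proof (Rmin_l 1 (eps / (2 * (Cmod m + Cmod l + 1)))). fold e in H. lra. }
  pose proof (Rmin_r 1 (eps / (2 * (Cmod m + Cmod l + 1)))). fold e in H.
  assert (E2 : (e * (2 * (Cmod m + Cmod l + 1)) <= eps)%R).
  { apply (Rmult_le_compat_r (2 * (Cmod m + Cmod l + 1))) in H; [|lra].
    replace (eps / (2 * (Cmod m + Cmod l + 1)) * (2 * (Cmod m + Cmod l + 1)))%R with eps in H by (field; lra). lra. }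
  pose proof (Cmod_ge_0 (u n - l)). pose proof (Cmod_ge_0 (v n - m)). pose proof (Cmod_ge_0 l).
  pose proof (Cmod_ge_0 (v n)). pose proof (Cmod_ge_0 m).
  assert (Cmod (u n - l) * Cmod (v n) <= e * (Cmod m + 1))%R by (apply Rmult_le_compat; lra).
  assert (Cmod l * Cmod (v n - m) <= Cmod l * e)%R by (apply Rmult_le_compat_l; lra).
  nra.
Qed.

Lemma ex_series_inv_sq : ex_series (fun k => / (INR k + 1) ^ 2)%R.
Proof.
  set (b := fun k => (2 * (/ (INR k + 1) - / (INR k + 2)))%R).
  assert (Sb : forall N, sum_n b N = (2 * (1 - / (INR N + 2)))%R).
  { induction N. rewrite sum_O. unfold b. simpl. field.
    rewrite sum_Sn, IHN. unfold b. rewrite S_INR. match goal with |- plus ?a ?b = ?c => change (@eq R (Rplus a b) c) end. field.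
    split; pose proof (pos_INR N); lra. }
  assert (Eb : ex_series b).
  { exists 2%R. unfold is_series. eapply filterlim_ext. intro N. symmetry. apply Sb.
    apply (is_lim_seq_spec _ 2%R). intros eps. 
    destruct (nat_above (2 / eps)) as [N HN]. exists N. intros n Hn.
    assert (INR N <= INR n)%R by (apply le_INR; lia).
    pose proof (pos_INR n). pose proof (cond_pos eps).
    assert (/ (INR n + 2) < eps / 2)%R.
    { replace (eps / 2)%R with (/ (2 / eps))%R by (field; lra). apply Rinv_lt_contravar.
      apply Rmult_lt_0_compat; [apply Rdiv_lt_0_compat; lra|lra]. lra. }
    assert (0 < / (INR n + 2))%R by (apply Rinv_0_lt_compat; lra).
    rewrite Rabs_left1; lra. }
  apply (ex_series_le (K:=R_AbsRing) (V:=R_CompleteNormedModule) _ b); [|exact Eb].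
  intro k. change norm with Rabs. pose proof (pos_INR k).
  assert (0 < / (INR k + 1) ^ 2)%R by (apply Rinv_0_lt_compat; nra).
  rewrite Rabs_pos_eq by lra. unfold b.
  replace (2 * (/ (INR k + 1) - / (INR k + 2)))%R with (2 / ((INR k + 1) * (INR k + 2)))%R by (field; lra).
  replace (2 / ((INR k + 1) * (INR k + 2)))%R with (/ ((INR k + 1) * (INR k + 2) / 2))%R by (field; lra).
  apply Rinv_le_contravar; nra.
Qed.

Definition gs (x : C) (n : nat) : C := Cpow_real (INR n) x * RtoC (INR (fact n)) / Cpoch x (S n).
Definition Lg (n : nat) : R := (ln (INR (S n)) - ln (INR n))%R.
Definition ug (x : C) (n : nat) : C := Cexp (x * RtoC (Lg n)) * RtoC (INR (S n)) / (x + RtoC (INR (S n))) - 1.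

Lemma npint_nz (x : C) (m : nat) : not_npint x -> x + RtoC (INR m) <> 0.
Proof.
  intros Hx H. apply (Hx m). replace x with ((x + RtoC (INR m)) - RtoC (INR m)) by ring.
  rewrite H. ring.
Qed.

Lemma Cpoch_nz (x : C) (n : nat) : not_npint x -> Cpoch x n <> 0.
Proof.
  intros Hx. induction n; simpl.
  - intro H. injection H. lra.
  - apply Cmult_neq_0. exact IHn. apply npint_nz, Hx.
Qed.

Lemma Cpoch_shift (x : C) (m : nat) : Cpoch x m * (x + RtoC (INR m)) = x * Cpoch (x + 1) m.
Proof.
  induction m.
  - simpl. ring.
  - change (Cpoch x (S m)) with (Cpoch x m * (x + RtoC (INR m))).
    change (Cpoch (x+1) (S m)) with (Cpoch (x+1) m * (x + 1 + RtoC (INR m))).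
    rewrite IHm.
    rewrite S_INR, RtoC_plus. ring.
Qed.

Lemma RtoC_lin (a b : R) : RtoC (a * b - 1) = RtoC a * RtoC b - 1.
Proof. unfold RtoC. apply injective_projections; simpl; ring. Qed.

Lemma gs_step (x : C) (n : nat) : not_npint x -> (1 <= n)%nat -> gs x (S n) = gs x n * (1 + ug x n).
Proof.
  intros Hx Hn. unfold gs, ug, Cpow_real.
  replace (ln (INR (S n))) with (ln (INR n) + Lg n)%R by (unfold Lg; ring).
  rewrite RtoC_plus, Cmult_plus_distr_l, Cexp_add.
  change (Cpoch x (S (S n))) with (Cpoch x (S n) * (x + RtoC (INR (S n)))).
  change (fact (S n)) with (S n * fact n)%nat. rewrite mult_INR, RtoC_mult.
  pose proof (Cpoch_nz x (S n) Hx). pose proof (npint_nz x (S n) Hx).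
  field. split; assumption.
Qed.

Lemma Cmod_RtoC_pos (r : R) : (0 <= r)%R -> Cmod (RtoC r) = r.
Proof. intros H. rewrite Cmod_R. apply Rabs_pos_eq, H. Qed.

Lemma ug_bound (x : C) (n : nat) : (1 <= n)%nat -> (2 * Cmod x + 1 <= INR n)%R ->
  (Cmod (ug x n) <= (32 * Cmod x ^ 2 + 2 * Cmod x) * (/ INR n) ^ 2)%R.
Proof.
  intros Hn1 Hn2.
  set (nn := INR n) in *. set (X := Cmod x) in *.
  assert (Hnn : (1 <= nn)%R) by (unfold nn; apply (le_INR 1); exact Hn1).
  assert (HX : (0 <= X)%R) by apply Cmod_ge_0.
  set (iv := (/ nn)%R).
  assert (Hiv : (nn * iv = 1)%R) by (unfold iv; field; lra).
  assert (Hiv0 : (0 < iv)%R) by (unfold iv; apply Rinv_0_lt_compat; lra).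
  pose proof (ln_step nn Hnn) as [L1 L2].
  assert (EL : Lg n = (ln (nn + 1) - ln nn)%R) by (unfold Lg, nn; rewrite S_INR; reflexivity).
  rewrite <- EL in L1, L2. set (L := Lg n) in *. fold iv in L2.
  assert (HL0 : (0 <= L)%R) by (eapply Rle_trans; [|exact L1]; left; apply Rinv_0_lt_compat; lra).
  assert (HL1 : (1 <= (nn + 1) * L)%R).
  { apply (Rmult_le_compat_l (nn+1)) in L1; [|lra]. rewrite Rinv_r in L1 by lra. exact L1. }
  assert (HL2 : ((nn + 1) * L - 1 <= iv)%R).
  { nra. }
  set (w := x * RtoC L).
  assert (Hw : Cmod w = (X * L)%R) by (unfold w; rewrite Cmod_mult, Cmod_RtoC_pos by lra; reflexivity).
  assert (HwX : (X * L <= X * iv)%R) by (apply Rmult_le_compat_l; lra).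
  assert (Hw2 : (Cmod w <= 1/2)%R).
  { rewrite Hw. eapply Rle_trans. exact HwX.
    assert (X * iv * nn <= 1/2 * nn)%R.
    { replace (X * iv * nn)%R with X by (rewrite Rmult_assoc, (Rmult_comm iv), Hiv; ring). nra. }
    nra. }
  set (D := x + RtoC (INR (S n))).
  assert (HD : (nn / 2 <= Cmod D)%R).
  { unfold D. rewrite S_INR. fold nn.
    pose proof (Cmod_triangle (x + RtoC (nn + 1)) (- x)).
    replace (x + RtoC (nn + 1) + - x) with (RtoC (nn + 1)) in H by ring.
    rewrite Cmod_opp, Cmod_RtoC_pos in H by lra. fold X in H. lra. }
  assert (HD0 : D <> 0).
  { intro H0. rewrite H0, Cmod_0 in HD. lra. }
  assert (Eu : ug x n = (RtoC (nn + 1) * (Cexp w - 1 - w) + x * RtoC ((nn + 1) * L - 1)) / D).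
  { unfold ug. fold L. fold w. fold D. rewrite RtoC_lin. unfold D. replace (INR (S n)) with (nn + 1)%R by (unfold nn; rewrite S_INR; reflexivity).
    unfold w. field. intro HH; apply HD0; unfold D; rewrite S_INR; exact HH. }
  rewrite Eu. unfold Cdiv. rewrite Cmod_mult, Cmod_inv by exact HD0.
  assert (HDi : (/ Cmod D <= 2 * iv)%R).
  { replace (2 * iv)%R with (/ (nn / 2))%R by (unfold iv; field; lra).
    apply Rinv_le_contravar; lra. }
  assert (HN : (Cmod (RtoC (nn + 1) * (Cexp w - 1 - w) + x * RtoC ((nn + 1) * L - 1)) <= (16 * X^2 + X) * iv)%R).
  { eapply Rle_trans. apply Cmod_triangle. rewrite !Cmod_mult, !Cmod_RtoC_pos by lra. fold X.
    pose proof (Cexp_bound w Hw2) as CB. rewrite Hw in CB.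
    assert (X * L * (X * L) <= X * iv * (X * iv))%R by (apply Rmult_le_compat; nra).
    assert ((nn + 1) * Cmod (Cexp w - 1 - w) <= (nn + 1) * (8 * (X * iv) ^ 2))%R.
    { apply Rmult_le_compat_l. lra. simpl. simpl in CB. nra. }
    assert ((nn + 1) * (8 * (X * iv) ^ 2) <= 16 * X^2 * iv)%R.
    { replace ((nn + 1) * (8 * (X * iv) ^ 2))%R with (8 * X^2 * iv * (nn * iv + iv))%R by ring.
      rewrite Hiv. assert (0 <= X^2)%R by nra.
      replace (16 * X ^ 2 * iv)%R with (8 * X^2 * iv * 2)%R by ring.
      apply Rmult_le_compat_l. nra. assert (iv <= 1)%R by nra. lra. }
    assert (X * ((nn + 1) * L - 1) <= X * iv)%R by (apply Rmult_le_compat_l; lra).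
    lra. }
  pose proof (Cmod_ge_0 (RtoC (nn + 1) * (Cexp w - 1 - w) + x * RtoC ((nn + 1) * L - 1))).
  assert (0 <= / Cmod D)%R by (left; apply Rinv_0_lt_compat; lra).
  replace ((32 * X ^ 2 + 2 * X) * iv ^ 2)%R with (((16 * X^2 + X) * iv) * (2 * iv))%R by ring.
  apply Rmult_le_compat; assumption.
Qed.

Lemma ug_series (x : C) : ex_series (fun n => Cmod (ug x n)).
Proof.
  destruct (nat_above (2 * Cmod x + 1)) as [N HN].
  apply (ex_series_incr_n _ (S N)).
  set (Kx := (32 * Cmod x ^ 2 + 2 * Cmod x)%R).
  assert (HK : (0 <= Kx)%R) by (unfold Kx; pose proof (Cmod_ge_0 x); nra).
  apply (ex_series_le (K:=R_AbsRing) (V:=R_CompleteNormedModule) _ (fun k => Kx * / (INR k + 1) ^ 2)%R).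
  - intro k. change norm with Rabs. rewrite Rabs_pos_eq by apply Cmod_ge_0.
    assert (E1 : (INR k + 1 <= INR (S N + k))%R).
    { rewrite plus_INR, S_INR. pose proof (pos_INR N). lra. }
    assert (E2 : (2 * Cmod x + 1 <= INR (S N + k))%R).
    { rewrite plus_INR, S_INR. pose proof (pos_INR k). lra. }
    eapply Rle_trans. apply ug_bound. lia. exact E2. fold Kx.
    apply Rmult_le_compat_l. exact HK.
    rewrite <- Rinv_pow by (pose proof (pos_INR k); lra).
    apply Rinv_le_contravar. pose proof (pos_INR k). nra.
    apply pow_incr. pose proof (pos_INR k). lra.
  - apply (ex_series_scal_l (K:=R_AbsRing) (V:=R_NormedModule) Kx _ ex_series_inv_sq).
Qed.

Lemma gauss_conv (x : C) : not_npint x -> exists l, filterlim (gs x) eventually (locally l).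
Proof.
  intros Hx. apply (prod_conv (gs x) (ug x) 1).
  - intros n Hn. apply gs_step; assumption.
  - apply ug_series.
Qed.

Lemma gs_rec (x : C) (n : nat) : not_npint x -> (1 <= n)%nat ->
  gs (x + 1) n = gs x n * (x * RtoC (INR n) / (x + RtoC (INR (S n)))).
Proof.
  intros Hx Hn. unfold gs, Cpow_real.
  replace ((x + 1) * RtoC (ln (INR n))) with (x * RtoC (ln (INR n)) + RtoC (ln (INR n))) by ring.
  rewrite Cexp_add, Cexp_real, exp_ln by (apply (lt_INR 0); lia).
  pose proof (Cpoch_shift x (S n)) as Sh.
  assert (Hx0 : x <> 0) by (intro H; apply (Hx 0%nat); rewrite H; simpl; apply injective_projections; simpl; ring).
  pose proof (Cpoch_nz x (S n) Hx). pose proof (npint_nz x (S n) Hx).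
  assert (Cpoch (x + 1) (S n) = Cpoch x (S n) * (x + RtoC (INR (S n))) / x) by (rewrite Sh; field; exact Hx0).
  rewrite H1. field. repeat split; assumption.
Qed.

Lemma factor_lim (x : C) : filterlim (fun n => x * RtoC (INR n) / (x + RtoC (INR (S n)))) eventually (locally x).
Proof.
  apply C_eps_lim. intros eps Heps. set (X := Cmod x).
  assert (HX : (0 <= X)%R) by apply Cmod_ge_0.
  destruct (nat_above (2 * X + 1 + 2 * X * (X + 1) / eps)) as [N HN].
  exists N. intros n Hn. set (nn := INR n).
  assert (Hnn : (INR N <= nn)%R) by (apply le_INR; exact Hn).
  assert (H2 : (0 <= 2 * X * (X + 1) / eps)%R) by (apply Rmult_le_pos; [nra|left; apply Rinv_0_lt_compat; lra]).
  set (D := x + RtoC (INR (S n))).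
  assert (HD : (nn / 2 <= Cmod D)%R).
  { unfold D. rewrite S_INR. fold nn.
    pose proof (Cmod_triangle (x + RtoC (nn + 1)) (- x)).
    replace (x + RtoC (nn + 1) + - x) with (RtoC (nn + 1)) in H by ring.
    rewrite Cmod_opp, Cmod_RtoC_pos in H by (pose proof (pos_INR n); unfold nn; lra). fold X in H. lra. }
  assert (HD0 : D <> 0) by (intro H0; rewrite H0, Cmod_0 in HD; lra).
  replace (x * RtoC nn / D - x) with (- (x * (x + 1)) / D).
  2:{ field_simplify_eq. unfold D. rewrite S_INR, RtoC_plus. fold nn. ring. exact HD0. }
  unfold Cdiv. rewrite Cmod_mult, Cmod_inv, Cmod_opp, Cmod_mult by exact HD0.
  assert (Cmod (x + 1) <= X + 1)%R by (eapply Rle_trans; [apply Cmod_triangle|rewrite Cmod_1; fold X; lra]).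
  assert (HXX : (X * Cmod (x + 1) <= X * (X + 1))%R) by (apply Rmult_le_compat_l; lra).
  assert (Hi : (/ Cmod D <= 2 / nn)%R).
  { replace (2 / nn)%R with (/ (nn / 2))%R by (field; lra). apply Rinv_le_contravar; lra. }
  assert (Hnn2 : (2 * X * (X + 1) / eps < nn)%R) by lra.
  assert (2 * X * (X + 1) < eps * nn)%R.
  { apply (Rmult_lt_compat_l eps) in Hnn2; [|lra]. replace (eps * (2 * X * (X + 1) / eps))%R with (2 * X * (X+1))%R in Hnn2 by (field; lra). lra. }
  pose proof (Cmod_ge_0 (x + 1)).
  assert (0 <= / Cmod D)%R by (left; apply Rinv_0_lt_compat; lra).
  apply Rle_lt_trans with (X * (X + 1) * (2 / nn))%R.
  { fold X. apply Rmult_le_compat; try lra. nra. }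
  apply (Rmult_lt_reg_r nn). lra. replace (X * (X + 1) * (2 / nn) * nn)%R with (2 * X * (X + 1))%R by (field; lra). lra.
Qed.

Lemma CGamma_rec (x : C) : not_npint x -> CGamma (x + 1) = x * CGamma x.
Proof.
  intros Hx. destruct (gauss_conv x Hx) as [l Hl].
  unfold CGamma. fold (gs (x + 1)). fold (gs x).
  rewrite (Clim_correct _ _ Hl).
  apply Clim_correct. rewrite Cmult_comm.
  apply filterlim_ext_loc with (fun n => gs x n * (x * RtoC (INR n) / (x + RtoC (INR (S n))))).
  { exists 1%nat. intros n Hn. symmetry. apply gs_rec; assumption. }
  apply C_lim_mult. exact Hl. apply factor_lim.
Qed.


Open Scope C_scope.

Lemma CSeries_correct (u : nat -> C) (l : C) : is_series u l -> CSeries u = l.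
Proof.
  intros H. unfold CSeries.
  assert (E : exists l', filterlim (fun N => sum_n u N) eventually (locally l')) by (exists l; exact H).
  apply (filterlim_locally_unique (F := eventually) (fun N => sum_n u N)).
  apply epsilon_spec. exact E. exact H.
Qed.

Lemma CSeries_is (u : nat -> C) : ex_series u -> is_series u (CSeries u).
Proof. intros [l H]. rewrite (CSeries_correct u l H). exact H. Qed.

Lemma Cmod_series_le (u : nat -> C) (b : nat -> R) :
  (forall n, Cmod (u n) <= b n) -> ex_series b ->
  ex_series u /\ Cmod (CSeries u) <= Series b.
Proof.
  intros Hb Eb.
  assert (Eu : ex_series u) by (apply (ex_series_le u b); [exact Hb | exact Eb]).
  split; [exact Eu|].
  pose proof (CSeries_is u Eu) as Hu.
  pose proof (Series_correct b Eb) as HB.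
  assert (L : is_lim_seq (fun N => Cmod (sum_n u N)) (Cmod (CSeries u))).
  { apply (filterlim_comp _ _ _ (fun N => sum_n u N) norm eventually (locally (CSeries u))).
    exact Hu. exact (filterlim_norm (K:=C_AbsRing) (V:=C_NormedModule) (CSeries u)). }
  pose proof (is_lim_seq_le _ _ _ _ (fun N => Rle_trans _ _ _ (norm_sum_n_m u 0 N) (sum_n_m_le _ _ 0 N Hb)) L (HB : is_lim_seq (sum_n b) (Series b))) as R.
  exact R.
Qed.


Open Scope C_scope.

Lemma Cdecomp (y z : C) : y = z + (y - z).
Proof. ring. Qed.

Lemma deriv_of_rem (f : C -> C) (z d : C) (r K : R) : (0 < r)%R ->
  (forall h, (Cmod h < r)%R -> Rle (Cmod (f (z+h) - f z - h*d)) (Cmod h ^ 2 * K)%R) ->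
  is_derive f z d.
Proof.
  intros Hr H. split.
  - apply is_linear_scal_l.
  - intros x Hx. apply (is_filter_lim_locally_unique (K:=C_AbsRing) (V:=AbsRing_NormedModule C_AbsRing)) in Hx. subst x.
    intros eps.
    assert (Hd : (0 < Rmin r (eps / (Rabs K + 1)) / 2)%R).
    { apply Rmult_lt_0_compat; [|lra]. apply Rmin_pos; [lra|].
      apply Rdiv_lt_0_compat; [apply cond_pos|]. pose proof (Rabs_pos K); lra. }
    exists (mkposreal _ Hd). intros y Hy.
    change (Cmod (y - z) < Rmin r (eps / (Rabs K + 1)) / 2)%R in Hy.
    assert (S2 : (sqrt 2 < 2)%R).
    { rewrite <- (sqrt_square 2) at 2 by lra. apply sqrt_lt_1_alt. lra. }
    change (Cmod (f y - f z - (y - z) * d) <= eps * Cmod (y - z))%R.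
    assert (Hy' : exists h : C, h = y - z /\ @eq C y (z + h)) by (exists (y - z); split; [reflexivity|apply Cdecomp]).
    destruct Hy' as [h [Hhd Hy']]. rewrite <- Hhd in *.
    assert (Hh0 : (0 <= Cmod h)%R) by apply Cmod_ge_0.
    assert (Hmin1 := Rmin_l r (eps / (Rabs K + 1))).
    assert (Hmin2 := Rmin_r r (eps / (Rabs K + 1))).
    assert (HKp : (0 < Rabs K + 1)%R) by (pose proof (Rabs_pos K); lra).
    assert (Hh : (Cmod h < Rmin r (eps / (Rabs K + 1)))%R).
    { pose proof (Rmin_pos r (eps / (Rabs K + 1)) Hr (Rdiv_lt_0_compat _ _ (cond_pos eps) HKp)).
      lra. }
    rewrite Hy'. eapply Rle_trans. apply H. lra.
    assert (HK : (Cmod h * (Rabs K + 1) <= eps)%R).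
    { assert (Cmod h <= eps / (Rabs K + 1))%R by lra.
      apply (Rmult_le_compat_r (Rabs K + 1)) in H0; [|pose proof (Rabs_pos K); lra].
      unfold Rdiv in H0. rewrite Rmult_assoc, Rinv_l in H0 by (pose proof (Rabs_pos K); lra). lra. }
    pose proof (Rle_abs K). pose proof (Rabs_pos K).
    assert (Cmod h ^2 * K <= Cmod h * (Cmod h * (Rabs K + 1)))%R by nra.
    pose proof (cond_pos eps). nra.
Qed.

Lemma series_rem (T : nat -> C -> C) (T' : nat -> C) (z : C) (r : R) (M : nat -> R) :
  (forall k h, (Cmod h < r)%R -> Rle (Cmod (T k (z+h) - T k z - h * T' k)) (Cmod h ^2 * M k)%R) ->
  (forall h, (Cmod h < r)%R -> ex_series (fun k => T k (z+h))) ->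
  ex_series T' -> ex_series M ->
  forall h, (Cmod h < r)%R ->
  Rle (Cmod (CSeries (fun k => T k (z+h)) - CSeries (fun k => T k z) - h * CSeries T'))
    (Cmod h ^2 * Series M)%R.
Proof.
  intros HT Ex E' EM h Hh.
  assert (H0 : (Cmod 0 < r)%R) by (rewrite Cmod_0; eapply Rle_lt_trans; [apply Cmod_ge_0|exact Hh]).
  pose proof (CSeries_is _ (Ex h Hh)) as S1.
  pose proof (CSeries_is _ (Ex 0 H0)) as S0.
  replace (fun k => T k (z + 0)) with (fun k => T k z) in S0
    by (apply functional_extensionality; intro k; rewrite Cplus_0_r; reflexivity).
  pose proof (CSeries_is _ E') as S'.
  pose proof (is_series_scal (K:=C_AbsRing) (V:=C_NormedModule) (Copp 1) _ _ S0) as S0'.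
  pose proof (is_series_scal (K:=C_AbsRing) (V:=C_NormedModule) (- h) _ _ S') as S''.
  pose proof (is_series_plus _ _ _ _ (is_series_plus _ _ _ _ S1 S0') S'') as SS.
  destruct (Cmod_series_le (fun k => T k (z + h) - T k z - h * T' k) (fun k => Cmod h ^2 * M k)%R) as [_ Hle].
  { intro k. apply HT, Hh. }
  { exact (ex_series_scal_l (K:=R_AbsRing) (V:=R_NormedModule) (Cmod h ^ 2)%R M EM). }
  assert (SS2 : is_series (fun k => T k (z + h) - T k z - h * T' k)
     ((CSeries (fun k : nat => T k (z + h)) + (Copp 1) * (CSeries (fun k : nat => T k z))) + (- h) * CSeries T')).
  { eapply is_series_ext; [|exact SS]. intro k. cbv beta.
    change (Cplus (Cplus (T k (z+h)) (Cmult (Copp 1) (T k z))) (Cmult (-h) (T' k)) = T k (z + h) - T k z - h * T' k).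
    ring. }
  rewrite (CSeries_correct _ _ SS2) in Hle.
  rewrite Series_scal_l in Hle.
  replace (CSeries (fun k : nat => T k (z + h)) - CSeries (fun k : nat => T k z) - h * CSeries T')
    with ((CSeries (fun k : nat => T k (z + h)) + (Copp 1) * (CSeries (fun k : nat => T k z))) + (- h) * CSeries T') by ring.
  exact Hle.
Qed.


Open Scope C_scope.

Lemma Cinv0 : / (RtoC 0) = 0.
Proof. unfold Cinv. simpl. apply injective_projections; simpl; unfold Rdiv; ring. Qed.

Lemma Cinv_mult_all (a b : C) : / (a * b) = / a * / b.
Proof.
  destruct (Ceq_dec a 0) as [Ha|Ha]. subst. rewrite Cmult_0_l, Cinv0. ring.
  destruct (Ceq_dec b 0) as [Hb|Hb]. subst. rewrite Cmult_0_r, Cinv0. ring.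
  field. split; assumption.
Qed.

Lemma Cmod_inv_all (a : C) : Cmod (/ a) = (/ Cmod a)%R.
Proof.
  destruct (Ceq_dec a 0) as [Ha|Ha]. subst. rewrite Cinv0, Cmod_0. rewrite Rinv_0. reflexivity.
  apply Cmod_inv, Ha.
Qed.

Lemma Cpown_add (u : C) (m n : nat) : Cpown u (m + n) = Cpown u m * Cpown u n.
Proof. induction m; simpl. ring. rewrite IHm. ring. Qed.

Lemma Cpown_mult (u v : C) (n : nat) : Cpown (u * v) n = Cpown u n * Cpown v n.
Proof. induction n; simpl. ring. rewrite IHn. ring. Qed.

Lemma Cpown_inv (u : C) (n : nat) : Cpown (/ u) n = / Cpown u n.
Proof. induction n; simpl. unfold Cinv; apply injective_projections; simpl; field. rewrite IHn, Cinv_mult_all. reflexivity. Qed.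

Lemma Cmod_Cpown (u : C) (n : nat) : Cmod (Cpown u n) = (Cmod u ^ n)%R.
Proof. induction n; simpl. apply Cmod_1. rewrite Cmod_mult, IHn. reflexivity. Qed.

Lemma Cmod_Cpown_le (u : C) (r : R) (n : nat) : (Cmod u <= r)%R -> (Cmod (Cpown u n) <= r ^ n)%R.
Proof. intros H. rewrite Cmod_Cpown. apply pow_incr. split. apply Cmod_ge_0. exact H. Qed.

Lemma Cmod_m1pow (n : nat) : Cmod (Cpown (- (1)) n) = 1%R.
Proof. rewrite Cmod_Cpown, Cmod_opp, Cmod_1. apply pow1. Qed.

Lemma pow_rem (u v h : C) (rho : R) (m : nat) :
  u - v + h * u * v = 0 -> (Cmod u <= rho)%R -> (Cmod v <= rho)%R ->
  (Cmod (Cpown u m - Cpown v m - h * (- RtoC (INR m) * Cpown v (S m)))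
     <= Cmod h ^ 2 * (INR m ^ 2 * rho ^ (m + 2)))%R.
Proof.
  intros E Hu Hv.
  assert (Hr : (0 <= rho)%R) by (eapply Rle_trans; [apply Cmod_ge_0|exact Hu]).
  induction m.
  - simpl. replace (1 - 1 - h * (- RtoC 0 * (v * 1))) with (RtoC 0) by (apply injective_projections; simpl; ring).
    rewrite Cmod_0. simpl. pose proof (Cmod_ge_0 h). nra.
  - set (D := Cpown u m - Cpown v m - h * (- RtoC (INR m) * Cpown v (S m))) in *.
    assert (Eq : Cpown u (S m) - Cpown v (S m) - h * (- RtoC (INR (S m)) * Cpown v (S (S m)))
       = u * D + RtoC (INR (S m)) * (h * h) * u * Cpown v (S (S m))
         + (u - v + h * u * v) * (Cpown v m - RtoC (INR (S m)) * h * Cpown v (S m))).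
    { unfold D. simpl Cpown. rewrite S_INR, RtoC_plus. ring. }
    rewrite Eq, E. rewrite Cmult_0_l, Cplus_0_r.
    eapply Rle_trans. apply Cmod_triangle. rewrite !Cmod_mult, Cmod_RtoC_pos by apply pos_INR.
    pose proof (Cmod_Cpown_le v rho (S (S m)) Hv).
    pose proof (Cmod_ge_0 h). pose proof (Cmod_ge_0 u). pose proof (Cmod_ge_0 D). pose proof (pos_INR m).
    pose proof (Cmod_ge_0 (Cpown v (S (S m)))).
    assert (X1 : (Cmod u * Cmod D <= rho * (Cmod h ^ 2 * (INR m ^ 2 * rho ^ (m + 2))))%R)
      by (apply Rmult_le_compat; try assumption; lra).
    assert (X2 : (INR (S m) * (Cmod h * Cmod h) * Cmod u * Cmod (Cpown v (S (S m)))
        <= INR (S m) * (Cmod h * Cmod h) * rho * rho ^ (S (S m)))%R).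
    { apply Rmult_le_compat; [ |exact H4| |exact H].
      - apply Rmult_le_pos; [apply Rmult_le_pos; [apply pos_INR|nra]|exact H1].
      - apply Rmult_le_compat_l; [apply Rmult_le_pos; [apply pos_INR|nra]|exact Hu]. }
    rewrite S_INR in *.
    replace (rho * (Cmod h ^ 2 * (INR m ^ 2 * rho ^ (m + 2))))%R with (Cmod h ^ 2 * rho ^ (S m + 2) * INR m ^ 2)%R in X1
      by (rewrite Nat.add_succ_l; simpl; ring).
    replace ((INR m + 1) * (Cmod h * Cmod h) * rho * rho ^ S (S m))%R with (Cmod h ^ 2 * rho ^ (S m + 2) * (INR m + 1))%R in X2
      by (rewrite Nat.add_succ_l, Nat.add_comm; simpl; ring).
    assert (0 <= Cmod h ^ 2 * rho ^ (S m + 2))%R by (apply Rmult_le_pos; apply pow_le; lra).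
    replace (Cmod h ^ 2 * ((INR m + 1) ^ 2 * rho ^ (S m + 2)))%R
      with (Cmod h ^ 2 * rho ^ (S m + 2) * (INR m ^ 2 + INR m + 1) + Cmod h ^ 2 * rho ^ (S m + 2) * INR m)%R by ring.
    nra.
Qed.

Lemma ratio_half (u : nat -> R) (N : nat) : (forall n, 0 <= u n)%R ->
  (forall n, (N <= n)%nat -> (u (S n) <= u n / 2)%R) -> ex_series u.
Proof.
  intros H0 H. apply (ex_series_incr_n u N).
  assert (B : forall k, (u (N + k)%nat <= u N * (1/2) ^ k)%R).
  { induction k. rewrite Nat.add_0_r. simpl. lra.
    rewrite Nat.add_succ_r. eapply Rle_trans. apply H. lia. simpl. lra. }
  apply (ex_series_le (K:=R_AbsRing) (V:=R_CompleteNormedModule) _ (fun k => u N * (1/2)^k)%R).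
  - intro k. change norm with Rabs. rewrite Rabs_pos_eq by apply H0. apply B.
  - apply (ex_series_scal_l (K:=R_AbsRing) (V:=R_NormedModule) (u N)).
    exists (/ (1 - 1/2))%R. apply is_series_geom. rewrite Rabs_pos_eq; lra.
Qed.

Lemma Cmod_shift_lb (q : C) (r : R) : (0 <= r)%R -> (r - Cmod q <= Cmod (q + RtoC r))%R.
Proof.
  intros Hr. pose proof (Cmod_triangle (q + RtoC r) (- q)).
  replace (q + RtoC r + - q) with (RtoC r) in H by ring.
  rewrite Cmod_opp, Cmod_RtoC_pos in H by exact Hr. lra.
Qed.

Lemma Cmod_shift_ub (q : C) (r : R) : (0 <= r)%R -> (Cmod (q + RtoC r) <= Cmod q + r)%R.
Proof.
  intros Hr. eapply Rle_trans. apply Cmod_triangle. rewrite Cmod_RtoC_pos by exact Hr. lra.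
Qed.

Lemma entire_ratio (a : nat -> C) (p q : C) :
  (forall n, a (S n) = a n * ((p + RtoC (INR n)) / ((q + RtoC (INR n)) * RtoC (INR (S n))))) ->
  forall sg : R, (0 <= sg)%R -> ex_series (fun n => Cmod (a n) * sg ^ n)%R.
Proof.
  intros Ha sg Hsg.
  destruct (nat_above (2 * Cmod q + 4 * sg * (Cmod p + 1) + 1)) as [N HN].
  apply (ratio_half _ N).
  - intro n. apply Rmult_le_pos. apply Cmod_ge_0. apply pow_le, Hsg.
  - intros n Hn. rewrite Ha, Cmod_mult. simpl pow.
    assert (Hnn : (INR N <= INR n)%R) by (apply le_INR; exact Hn).
    pose proof (pos_INR n) as Hn0.
    assert (Hsp : (0 <= 4 * sg * (Cmod p + 1))%R) by (pose proof (Cmod_ge_0 p); nra).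
    set (nn := INR n) in *. pose proof (Cmod_ge_0 p). pose proof (Cmod_ge_0 q).
    set (r := (p + RtoC nn) / ((q + RtoC nn) * RtoC (INR (S n)))).
    assert (Hr : (sg * Cmod r <= 1/2)%R).
    { unfold r, Cdiv. rewrite Cmod_mult, Cmod_inv_all, Cmod_mult, (Cmod_RtoC_pos (INR (S n))) by apply pos_INR.
      rewrite S_INR. fold nn.
      pose proof (Cmod_shift_lb q nn ltac:(lra)). pose proof (Cmod_shift_ub p nn ltac:(lra)).
      assert (Hd : (nn * (nn + 1) / 2 <= Cmod (q + RtoC nn) * (nn + 1))%R) by nra.
      assert (Hd0 : (0 < nn * (nn + 1) / 2)%R) by nra.
      assert (HI : (/ (Cmod (q + RtoC nn) * (nn + 1)) <= 2 / (nn * (nn + 1)))%R).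
      { replace (2 / (nn * (nn+1)))%R with (/ (nn * (nn + 1) / 2))%R by (field; lra).
        apply Rinv_le_contravar; lra. }
      pose proof (Cmod_ge_0 (p + RtoC nn)).
      apply Rle_trans with (sg * ((Cmod p + nn) * (2 / (nn * (nn + 1)))))%R.
      { apply Rmult_le_compat_l. lra. apply Rmult_le_compat; try lra.
        left; apply Rinv_0_lt_compat. nra. }
      assert (sg * (Cmod p + nn) * 2 <= 1/2 * (nn * (nn+1)))%R by nra.
      apply (Rmult_le_reg_r (nn * (nn + 1))). nra.
      replace (sg * ((Cmod p + nn) * (2 / (nn * (nn + 1)))) * (nn * (nn + 1)))%R with (sg * (Cmod p + nn) * 2)%R by (field; lra).
      lra. }
    pose proof (Cmod_ge_0 (a n)). pose proof (pow_le sg n Hsg).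
    replace (Cmod (a n) * Cmod r * (sg * sg ^ n))%R with ((Cmod (a n) * sg ^ n) * (sg * Cmod r))%R by ring.
    assert (0 <= Cmod (a n) * sg ^ n)%R by nra. nra.
Qed.

Lemma dmin (q : C) : not_npint q -> exists d, (0 < d)%R /\ forall m, (d <= Cmod (q + RtoC (INR m)))%R.
Proof.
  intros Hq.
  assert (F : forall N, exists d, (0 < d)%R /\ forall m, (m < N)%nat -> (d <= Cmod (q + RtoC (INR m)))%R).
  { induction N.
    - exists 1%R. split. lra. intros m Hm. lia.
    - destruct IHN as [d [Hd HN]].
      assert (P0 : (0 < Cmod (q + RtoC (INR N)))%R) by (apply Cmod_gt_0, npint_nz, Hq).
      exists (Rmin d (Cmod (q + RtoC (INR N)))). split. apply Rmin_pos; assumption.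
      intros m Hm. destruct (Nat.eq_dec m N). subst. apply Rmin_r.
      eapply Rle_trans. apply Rmin_l. apply HN. lia. }
  destruct (nat_above (Cmod q + 1)) as [N HN].
  destruct (F N) as [d [Hd HdN]].
  exists (Rmin d 1). split. apply Rmin_pos; lra.
  intro m. destruct (Nat.lt_ge_cases m N).
  - eapply Rle_trans. apply Rmin_l. apply HdN, H.
  - eapply Rle_trans. apply Rmin_r.
    assert (INR N <= INR m)%R by (apply le_INR; exact H).
    pose proof (Cmod_shift_lb q (INR m) (pos_INR m)). lra.
Qed.

Lemma npint_shift (x : C) (n : nat) : not_npint x -> not_npint (x + RtoC (INR n)).
Proof.
  intros Hx m H. apply (Hx (m + n)%nat). rewrite plus_INR, RtoC_plus.
  replace x with ((x + RtoC (INR n)) - RtoC (INR n)) by ring. rewrite H. ring.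
Qed.

Lemma CGamma_poch (x : C) (n : nat) : not_npint x -> CGamma (x + RtoC (INR n)) = CGamma x * Cpoch x n.
Proof.
  intros Hx. induction n.
  - simpl. replace (x + RtoC 0) with x by ring. ring.
  - replace (x + RtoC (INR (S n))) with ((x + RtoC (INR n)) + 1) by (rewrite S_INR, RtoC_plus; ring).
    rewrite CGamma_rec by (apply npint_shift, Hx). rewrite IHn.
    change (Cpoch x (S n)) with (Cpoch x n * (x + RtoC (INR n))). ring.
Qed.

Lemma sq_le_pow2 (m : nat) : (INR m ^ 2 <= 2 ^ (m + 1))%R.
Proof.
  assert (forall m, (3 <= m)%nat -> (INR m ^ 2 <= 2 ^ (m + 1))%R).
  { intros k Hk. induction Hk.
    - simpl. lra.
    - rewrite S_INR. replace (S m0 + 1)%nat with (S (m0 + 1)) by lia. simpl pow.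
      assert (3 <= INR m0)%R by (replace 3%R with (INR 3) by (simpl; lra); apply le_INR; exact Hk).
      simpl in IHHk. nra. }
  destruct m as [|[|[|m]]]; try (simpl; lra). apply H. lia.
Qed.

Lemma n_le_pow2 (m : nat) : (INR m <= 2 ^ m)%R.
Proof.
  induction m. simpl. lra. rewrite S_INR. simpl.
  assert (1 <= 2 ^ m)%R by (apply pow_R1_Rle; lra). lra.
Qed.


Open Scope C_scope.

Ltac gen_inv := repeat match goal with |- context [Cinv ?x] => let i := fresh "i" in generalize (Cinv x); intro i end.

Lemma Cinv1 : / (RtoC 1) = 1.
Proof. unfold Cinv. simpl. apply injective_projections; simpl; field. Qed.

Definition Aco (p q : C) (v : nat) : C := Cpoch p v / (Cpoch q v * RtoC (INR (fact v))).

Lemma RtoC_nz (r : R) : r <> 0%R -> RtoC r <> 0.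
Proof. intros H E. apply H. injection E. auto. Qed.

Lemma fact_nz (n : nat) : RtoC (INR (fact n)) <> 0.
Proof. apply RtoC_nz, INR_fact_neq_0. Qed.

Lemma Sn_nz (n : nat) : RtoC (INR (S n)) <> 0.
Proof. apply RtoC_nz. apply not_0_INR. lia. Qed.

Lemma Aco_ratio (p q : C) (n : nat) : not_npint q ->
  Aco p q (S n) = Aco p q n * ((p + RtoC (INR n)) / ((q + RtoC (INR n)) * RtoC (INR (S n)))).
Proof.
  intros Hq. unfold Aco.
  change (Cpoch p (S n)) with (Cpoch p n * (p + RtoC (INR n))).
  change (Cpoch q (S n)) with (Cpoch q n * (q + RtoC (INR n))).
  change (fact (S n)) with (S n * fact n)%nat. rewrite mult_INR, RtoC_mult.
  pose proof (Cpoch_nz q n Hq). pose proof (npint_nz q n Hq). pose proof (fact_nz n). pose proof (Sn_nz n).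
  field. repeat split; assumption.
Qed.

Lemma Aco_entire (p q : C) : not_npint q -> forall sg, (0 <= sg)%R -> ex_series (fun n => Cmod (Aco p q n) * sg ^ n)%R.
Proof. intros Hq. apply (entire_ratio _ p q). intro n. apply Aco_ratio, Hq. Qed.

Lemma CSeries_scal (c : C) (u : nat -> C) : ex_series u -> CSeries (fun n => c * u n) = c * CSeries u.
Proof.
  intros E. apply CSeries_correct.
  exact (is_series_scal (K:=C_AbsRing) (V:=C_NormedModule) c _ _ (CSeries_is u E)).
Qed.

Lemma CSeries_lin (a b : C) (u v : nat -> C) : ex_series u -> ex_series v ->
  CSeries (fun n => a * u n + b * v n) = a * CSeries u + b * CSeries v.
Proof.
  intros Eu Ev. apply CSeries_correct.
  exact (is_series_plus _ _ _ _ (is_series_scal (K:=C_AbsRing) (V:=C_NormedModule) a _ _ (CSeries_is u Eu))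
                              (is_series_scal (K:=C_AbsRing) (V:=C_NormedModule) b _ _ (CSeries_is v Ev))).
Qed.

Lemma CSeries_ext (u v : nat -> C) : (forall n, u n = v n) -> CSeries u = CSeries v.
Proof. intros H. f_equal. apply functional_extensionality. exact H. Qed.

Lemma ex_series_bound (u : nat -> C) (b : nat -> R) : (forall n, (Cmod (u n) <= b n)%R) -> ex_series b -> ex_series u.
Proof. intros H E. exact (proj1 (Cmod_series_le u b H E)). Qed.

Lemma hyp1 (a b x : C) (n : nat) : hyp_term [a] [b] x n = Aco a b n * Cpown x n.
Proof. unfold hyp_term, Aco. cbn [map prodC fold_right]. unfold Cdiv. rewrite !Cinv_mult_all, Cinv1. gen_inv. ring. Qed.

Lemma hyp1_ex (a b x : C) : not_npint b -> ex_series (hyp_term [a] [b] x).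
Proof.
  intros Hb. apply (ex_series_bound _ (fun n => Cmod (Aco a b n) * Cmod x ^ n)%R).
  - intro n. rewrite hyp1, Cmod_mult, Cmod_Cpown. lra.
  - apply Aco_entire. exact Hb. apply Cmod_ge_0.
Qed.


Open Scope C_scope.

Definition Kc (al be ga de : C) : C := CGamma (al + ga) * CGamma (al + 1) / (CGamma be * CGamma de).
Definition coef (al be ga de : C) (v n : nat) : C :=
  Kc al be ga de * Aco (al + ga) be v * Aco (al + 1) de n * Cpown (- (1)) n / (be + RtoC (INR (v + n))).
Definition Tin (al be ga de : C) (v n : nat) (y : C) : C := coef al be ga de v n * Cpown (/ y) (v + n).

Lemma hyp2 (a c dd x : C) (n : nat) : not_npint c -> not_npint dd ->
  hyp_term [a; c] [dd; c + 1] x n = Aco a dd n * (c / (c + RtoC (INR n))) * Cpown x n.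
Proof.
  intros Hc Hd.
  assert (Hc0 : c <> 0) by (intro E; apply (Hc 0%nat); rewrite E; simpl; apply injective_projections; simpl; ring).
  pose proof (Cpoch_shift c n) as Sh.
  assert (E : Cpoch (c + 1) n = Cpoch c n * (c + RtoC (INR n)) / c) by (rewrite Sh; field; exact Hc0).
  unfold hyp_term, Aco. cbn [map prodC fold_right]. rewrite E.
  pose proof (Cpoch_nz c n Hc). pose proof (Cpoch_nz dd n Hd). pose proof (npint_nz c n Hc). pose proof (fact_nz n).
  field. repeat split; assumption.
Qed.

Lemma hyp2_ex (a c dd x : C) : not_npint c -> not_npint dd -> ex_series (hyp_term [a; c] [dd; c + 1] x).
Proof.
  intros Hc Hd. destruct (dmin c Hc) as [d [Hd0 Hdm]].
  apply (ex_series_bound _ (fun n => (Cmod c / d) * (Cmod (Aco a dd n) * Cmod x ^ n))%R).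
  - intro n. rewrite hyp2 by assumption. rewrite !Cmod_mult, Cmod_Cpown.
    unfold Cdiv. rewrite Cmod_mult, Cmod_inv_all.
    pose proof (Hdm n). pose proof (Cmod_ge_0 c). pose proof (Cmod_ge_0 (Aco a dd n)).
    pose proof (pow_le (Cmod x) n (Cmod_ge_0 x)).
    assert (/ Cmod (c + RtoC (INR n)) <= / d)%R by (apply Rinv_le_contravar; assumption).
    assert (0 <= / Cmod (c + RtoC (INR n)))%R by (left; apply Rinv_0_lt_compat; lra).
    unfold Rdiv.
    replace (Cmod (Aco a dd n) * (Cmod c * / Cmod (c + RtoC (INR n))) * Cmod x ^ n)%R
      with ((Cmod c * (Cmod (Aco a dd n) * Cmod x ^ n)) * / Cmod (c + RtoC (INR n)))%R by ring.
    replace (Cmod c * / d * (Cmod (Aco a dd n) * Cmod x ^ n))%R with ((Cmod c * (Cmod (Aco a dd n) * Cmod x ^ n)) * / d)%R by ring.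
    apply Rmult_le_compat_l. apply Rmult_le_pos; [lra|]. apply Rmult_le_pos; lra. assumption.
  - apply (ex_series_scal_l (K:=R_AbsRing) (V:=R_NormedModule) (Cmod c / d)%R).
    apply Aco_entire. exact Hd. apply Cmod_ge_0.
Qed.

Lemma term_eq (al be ga de : C) (Hal : not_npint (al + 1)) (Halga : not_npint (al + ga))
  (Hbe : not_npint be) (Hde : not_npint de) (v : nat) (y : C) :
  / Cpown y v * CGamma (al + ga + RtoC (INR v)) / (RtoC (INR (fact v)) * CGamma (be + RtoC (INR v)))
    * MacE [al + 1; be + RtoC (INR v)] [de; be + 1 + RtoC (INR v)] y
  = CSeries (fun n => Tin al be ga de v n y).
Proof.
  set (c := be + RtoC (INR v)).
  assert (Hc : not_npint c) by (apply npint_shift, Hbe).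
  replace (be + 1 + RtoC (INR v)) with (c + 1) by (unfold c; ring).
  unfold MacE, pFq. cbn [map prodC fold_right].
  rewrite Cmult_assoc. rewrite <- CSeries_scal by (apply hyp2_ex; assumption).
  apply CSeries_ext. intro n. rewrite hyp2 by assumption.
  unfold Tin, coef, Kc, Aco.
  rewrite (CGamma_poch (al + ga) v Halga).
  unfold c. rewrite (CGamma_poch be v Hbe).
  replace (be + RtoC (INR v) + 1) with (be + RtoC (INR (S v))) by (rewrite S_INR, RtoC_plus; ring).
  rewrite (CGamma_poch be (S v) Hbe).
  change (Cpoch be (S v)) with (Cpoch be v * (be + RtoC (INR v))).
  rewrite Cpown_add, Cpown_inv.
  replace (Cpown (- / y) n) with (Cpown (- (1)) n * Cpown (/ y) n)
    by (rewrite <- Cpown_mult; f_equal; ring).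
  rewrite plus_INR, RtoC_plus.
  pose proof (Cpoch_nz be v Hbe) as N1. pose proof (npint_nz be v Hbe) as N2.
  pose proof (npint_nz (be + RtoC (INR v)) n Hc) as N3. assert (N3' : be + (RtoC (INR v) + RtoC (INR n)) <> 0) by (rewrite Cplus_assoc; exact N3).
  pose proof (fact_nz v) as N4. pose proof (fact_nz n) as N5. pose proof (Cpoch_nz de n Hde) as N6.
  set (G := CGamma be). set (igd := / CGamma de).
  unfold Cdiv. rewrite !Cinv_mult_all. fold igd.
  clearbody igd.
  set (iy := / Cpown y v). clearbody iy.
  destruct (Ceq_dec G 0) as [HG|HG].
  - rewrite HG, Cinv0. ring.
  - field. repeat split; try assumption.
Qed.


Open Scope C_scope.

Definition Tin' (al be ga de : C) (v n : nat) (z : C) : C :=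
  coef al be ga de v n * (- RtoC (INR (v + n)) * Cpown (/ z) (S (v + n))).

Lemma fser_eq (al be ga de : C) (Hal : not_npint (al + 1)) (Halga : not_npint (al + ga))
  (Hbe : not_npint be) (Hde : not_npint de) :
  fser al be ga de = fun y => CSeries (fun v => CSeries (fun n => Tin al be ga de v n y)).
Proof.
  apply functional_extensionality. intro y. unfold fser. apply CSeries_ext. intro v.
  apply term_eq; assumption.
Qed.

Lemma coef_bound (al be ga de : C) (Hbe : not_npint be) (d : R) :
  (0 < d)%R -> (forall m, (d <= Cmod (be + RtoC (INR m)))%R) ->
  forall v n, (Cmod (coef al be ga de v n) <= (Cmod (Kc al be ga de) / d) *
     (Cmod (Aco (al + ga) be v) * Cmod (Aco (al + 1) de n)))%R.
Proof.
  intros Hd Hdm v n. unfold coef, Cdiv. rewrite !Cmod_mult, Cmod_m1pow, Cmod_inv_all.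
  pose proof (Hdm (v + n)%nat).
  assert (/ Cmod (be + RtoC (INR (v + n))) <= / d)%R by (apply Rinv_le_contravar; assumption).
  pose proof (Cmod_ge_0 (Kc al be ga de)). pose proof (Cmod_ge_0 (Aco (al + ga) be v)).
  pose proof (Cmod_ge_0 (Aco (al + 1) de n)).
  assert (0 <= Cmod (Kc al be ga de) * Cmod (Aco (al + ga) be v) * Cmod (Aco (al + 1) de n))%R
    by (apply Rmult_le_pos; [apply Rmult_le_pos|]; assumption).
  unfold Rdiv.
  replace (Cmod (Kc al be ga de) * / d * (Cmod (Aco (al + ga) be v) * Cmod (Aco (al + 1) de n)))%R
    with (Cmod (Kc al be ga de) * Cmod (Aco (al + ga) be v) * Cmod (Aco (al + 1) de n) * / d)%R by ring.
  rewrite Rmult_1_r. apply Rmult_le_compat_l; assumption.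
Qed.

Lemma Aco0 (p q : C) : Aco p q 0 = 1.
Proof.
  unfold Aco. change (Cpoch p 0) with (RtoC 1). change (Cpoch q 0) with (RtoC 1).
  change (INR (fact 0)) with 1%R. unfold Cdiv. rewrite !Cmult_1_l. rewrite Cinv1. reflexivity.
Qed.

Section Bounds.
Variables (al be ga de : C) (Kd : R).
Hypothesis Hc : forall v n, (Cmod (coef al be ga de v n) <= Kd *
     (Cmod (Aco (al + ga) be v) * Cmod (Aco (al + 1) de n)))%R.

Let PP (sg : R) (v n : nat) : R := ((Cmod (Aco (al + ga) be v) * sg ^ v) * (Cmod (Aco (al + 1) de n) * sg ^ n))%R.

Lemma Kd_pos : (0 <= Kd)%R.
Proof.
  pose proof (Hc 0%nat 0%nat). rewrite !Aco0, Cmod_1 in H.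
  pose proof (Cmod_ge_0 (coef al be ga de 0 0)). lra.
Qed.

Lemma Tin_b (y : C) (sg : R) (v n : nat) : (Cmod (/ y) <= sg)%R ->
  (Cmod (Tin al be ga de v n y) <= Kd * PP sg v n)%R.
Proof.
  intros Hy. unfold Tin, PP. rewrite Cmod_mult.
  pose proof (Cmod_Cpown_le (/ y) sg (v + n) Hy). rewrite pow_add in H.
  pose proof (Hc v n). pose proof (Cmod_ge_0 (coef al be ga de v n)).
  pose proof (Cmod_ge_0 (Cpown (/ y) (v + n))).
  apply Rle_trans with (Kd * (Cmod (Aco (al + ga) be v) * Cmod (Aco (al + 1) de n)) * (sg ^ v * sg ^ n))%R.
  apply Rmult_le_compat; assumption. right; ring.
Qed.

Lemma Tin'_b (z : C) (rho : R) (v n : nat) : (Cmod (/ z) <= rho)%R ->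
  (Cmod (Tin' al be ga de v n z) <= Kd * rho * PP (2 * rho) v n)%R.
Proof.
  intros Hz. assert (Hr : (0 <= rho)%R) by (eapply Rle_trans; [apply Cmod_ge_0|exact Hz]).
  unfold Tin', PP. rewrite !Cmod_mult, Cmod_opp, Cmod_RtoC_pos by apply pos_INR.
  pose proof (Cmod_Cpown_le (/ z) rho (S (v + n)) Hz).
  pose proof (Hc v n). pose proof (Cmod_ge_0 (coef al be ga de v n)).
  pose proof (Cmod_ge_0 (Cpown (/ z) (S (v + n)))). pose proof (pos_INR (v + n)).
  pose proof (n_le_pow2 (v + n)).
  assert (INR (v + n) * Cmod (Cpown (/ z) (S (v + n))) <= 2 ^ (v + n) * rho ^ S (v + n))%R
    by (apply Rmult_le_compat; assumption).
  apply Rle_trans with (Kd * (Cmod (Aco (al + ga) be v) * Cmod (Aco (al + 1) de n)) * (2 ^ (v + n) * rho ^ S (v + n)))%R.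
  apply Rmult_le_compat; try assumption. apply Rmult_le_pos; [apply pos_INR|apply Cmod_ge_0].
  right. rewrite !Rpow_mult_distr. rewrite <- tech_pow_Rmult, !pow_add. ring.
Qed.

Lemma rem_b (z h : C) (rho : R) (v n : nat) : z <> 0 -> z + h <> 0 ->
  (Cmod (/ (z + h)) <= rho)%R -> (Cmod (/ z) <= rho)%R ->
  (Cmod (Tin al be ga de v n (z + h) - Tin al be ga de v n z - h * Tin' al be ga de v n z)
    <= Cmod h ^ 2 * (Kd * 2 * rho ^ 2 * PP (2 * rho) v n))%R.
Proof.
  intros Hz Hzh Hu Hw.
  assert (Hr : (0 <= rho)%R) by (eapply Rle_trans; [apply Cmod_ge_0|exact Hw]).
  replace (Tin al be ga de v n (z + h) - Tin al be ga de v n z - h * Tin' al be ga de v n z)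
    with (coef al be ga de v n * (Cpown (/ (z + h)) (v + n) - Cpown (/ z) (v + n)
            - h * (- RtoC (INR (v + n)) * Cpown (/ z) (S (v + n))))) by (unfold Tin, Tin'; ring).
  rewrite Cmod_mult.
  assert (E : / (z + h) - / z + h * / (z + h) * / z = 0) by (field; split; assumption).
  pose proof (pow_rem (/ (z + h)) (/ z) h rho (v + n) E Hu Hw) as PR.
  pose proof (Hc v n). pose proof (Cmod_ge_0 (coef al be ga de v n)).
  pose proof (sq_le_pow2 (v + n)).
  assert (B2 : (Cmod h ^ 2 * (INR (v + n) ^ 2 * rho ^ (v + n + 2)) <= Cmod h ^ 2 * (2 ^ (v + n + 1) * rho ^ (v + n + 2)))%R).
  { apply Rmult_le_compat_l. apply pow2_ge_0. apply Rmult_le_compat_r. apply pow_le, Hr. exact H1. }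
  apply Rle_trans with (Kd * (Cmod (Aco (al + ga) be v) * Cmod (Aco (al + 1) de n)) * (Cmod h ^ 2 * (2 ^ (v + n + 1) * rho ^ (v + n + 2))))%R.
  { apply Rmult_le_compat; try assumption. apply Cmod_ge_0. eapply Rle_trans. exact PR. exact B2. }
  right. unfold PP. rewrite !Rpow_mult_distr, !pow_add. simpl. ring.
Qed.

End Bounds.


Open Scope C_scope.

Lemma inv_near (z h : C) : z <> 0 -> (Cmod h < Cmod z / 2)%R ->
  z + h <> 0 /\ (Cmod (/ (z + h)) <= 2 / Cmod z)%R.
Proof.
  intros Hz Hh. assert (Hz0 : (0 < Cmod z)%R) by (apply Cmod_gt_0, Hz).
  pose proof (Cmod_triangle (z + h) (- h)). replace (z + h + - h) with z in H by ring.
  rewrite Cmod_opp in H.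
  assert (Hzh : (Cmod z / 2 < Cmod (z + h))%R) by lra.
  assert (N : z + h <> 0) by (intro E; rewrite E, Cmod_0 in Hzh; lra).
  split. exact N. rewrite Cmod_inv by exact N.
  replace (2 / Cmod z)%R with (/ (Cmod z / 2))%R by (field; lra).
  apply Rinv_le_contravar; lra.
Qed.

Lemma step_alg (al be ga de z : C) (v n : nat) : z <> 0 -> not_npint be ->
  - z * Tin' al be ga de v n z + be * Tin al be ga de v n z
  = (Kc al be ga de * (Aco (al + ga) be v * Cpown (/ z) v)) * hyp_term [al + 1] [de] (- / z) n.
Proof.
  intros Hz Hbe. rewrite hyp1. unfold Tin, Tin', coef.
  pose proof (npint_nz be (v + n) Hbe).
  replace (Cpown (- / z) n) with (Cpown (- (1)) n * Cpown (/ z) n) by (rewrite <- Cpown_mult; f_equal; ring).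
  change (Cpown (/ z) (S (v + n))) with (/ z * Cpown (/ z) (v + n)).
  rewrite Cpown_add. field. split; assumption.
Qed.

Theorem mainTheorem1 (al be ga de : C)
  (Hal : not_npint (al + 1)) (Halga : not_npint (al + ga))
  (Hbe : not_npint be) (Hde : not_npint de)
  (z : C) (Hz : z <> 0) :
  exists d : C,
    is_derive (fser al be ga de) z d /\
    - z * d + be * fser al be ga de z
      = MacE [al + 1] [de] z * MacE [al + ga] [be] (- z).
Proof.
  rewrite (fser_eq al be ga de Hal Halga Hbe Hde).
  destruct (dmin be Hbe) as [dd [Hdd Hdm]].
  set (Kd := (Cmod (Kc al be ga de) / dd)%R).
  pose proof (coef_bound al be ga de Hbe dd Hdd Hdm) as Hc. fold Kd in Hc.
  pose proof (Kd_pos al be ga de Kd Hc) as HKd.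
  assert (Hz0 : (0 < Cmod z)%R) by (apply Cmod_gt_0, Hz).
  set (rho := (2 / Cmod z)%R). set (r := (Cmod z / 2)%R). set (sg := (2 * rho)%R).
  assert (Hrho : (0 < rho)%R) by (unfold rho; apply Rdiv_lt_0_compat; lra).
  assert (Hr : (0 < r)%R) by (unfold r; lra).
  assert (Hsg : (0 <= sg)%R) by (unfold sg; lra).
  assert (Hzi : (Cmod (/ z) <= rho)%R).
  { rewrite Cmod_inv by exact Hz. unfold rho. unfold Rdiv.
    pose proof (Rinv_0_lt_compat _ Hz0). lra. }
  assert (Hyi : forall h, (Cmod h < r)%R -> z + h <> 0 /\ (Cmod (/ (z + h)) <= rho)%R)
    by (intros h Hh; apply inv_near; assumption).
  set (A := fun v => Aco (al + ga) be v). set (Bn := fun n => Aco (al + 1) de n).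
  set (cA := fun v => (Cmod (A v) * sg ^ v)%R). set (cB := fun n => (Cmod (Bn n) * sg ^ n)%R).
  assert (EA : ex_series cA) by (apply Aco_entire; assumption).
  assert (EB : ex_series cB) by (apply Aco_entire; assumption).
  set (SB := Series cB).
  set (T := fun v y => CSeries (fun n => Tin al be ga de v n y)).
  set (T' := fun v => CSeries (fun n => Tin' al be ga de v n z)).
  assert (ExIn : forall v h, (Cmod h < r)%R -> ex_series (fun n => Tin al be ga de v n (z + h))
      /\ Rle (Cmod (T v (z + h))) (Kd * cA v * SB)%R).
  { intros v h Hh. destruct (Hyi h Hh) as [_ Hu].
    assert (Hu' : (Cmod (/ (z + h)) <= sg)%R) by (unfold sg; lra).
    destruct (Cmod_series_le (fun n => Tin al be ga de v n (z + h)) (fun n => (Kd * cA v) * cB n)%R) as [E1 E2].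
    { intro n. eapply Rle_trans. apply (Tin_b al be ga de Kd Hc _ sg v n Hu'). right. unfold cA, cB, A, Bn. ring. }
    { apply (ex_series_scal_l (K:=R_AbsRing) (V:=R_NormedModule) (Kd * cA v)%R _ EB). }
    split. exact E1. unfold T. rewrite Series_scal_l in E2. exact E2. }
  assert (ExIn' : forall v, ex_series (fun n => Tin' al be ga de v n z) /\ (Cmod (T' v) <= Kd * rho * cA v * SB)%R).
  { intros v.
    destruct (Cmod_series_le (fun n => Tin' al be ga de v n z) (fun n => (Kd * rho * cA v) * cB n)%R) as [E1 E2].
    { intro n. eapply Rle_trans. apply (Tin'_b al be ga de Kd Hc z rho v n Hzi). right. unfold cA, cB, A, Bn, sg. ring. }
    { apply (ex_series_scal_l (K:=R_AbsRing) (V:=R_NormedModule) (Kd * rho * cA v)%R _ EB). }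
    split. exact E1. unfold T'. rewrite Series_scal_l in E2. exact E2. }
  assert (RemIn : forall v h, (Cmod h < r)%R ->
     Rle (Cmod (T v (z + h) - T v z - h * T' v)) (Cmod h ^ 2 * ((Kd * 2 * rho ^ 2 * SB) * cA v))%R).
  { intros v h Hh.
    pose proof (series_rem (fun n y => Tin al be ga de v n y) (fun n => Tin' al be ga de v n z) z r
      (fun n => (Kd * 2 * rho ^ 2 * cA v) * cB n)%R) as SR.
    assert (Q : (Cmod h ^ 2 * Series (fun n => (Kd * 2 * rho ^ 2 * cA v) * cB n) = Cmod h ^ 2 * ((Kd * 2 * rho ^ 2 * SB) * cA v))%R)
      by (rewrite Series_scal_l; fold SB; ring).
    rewrite <- Q. apply SR.
    - intros n h' Hh'. destruct (Hyi h' Hh') as [Nz Hu].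
      eapply Rle_trans. apply (rem_b al be ga de Kd Hc z h' rho v n Hz Nz Hu Hzi).
      right. unfold cA, cB, A, Bn, sg. ring.
    - intros h' Hh'. apply (ExIn v h' Hh').
    - apply (ExIn' v).
    - apply (ex_series_scal_l (K:=R_AbsRing) (V:=R_NormedModule) (Kd * 2 * rho ^ 2 * cA v)%R _ EB).
    - exact Hh. }
  assert (ExOut : forall h, (Cmod h < r)%R -> ex_series (fun v => T v (z + h))).
  { intros h Hh. apply (ex_series_bound _ (fun v => (Kd * SB) * cA v)%R).
    intro v. eapply Rle_trans. apply (ExIn v h Hh). right. ring.
    apply (ex_series_scal_l (K:=R_AbsRing) (V:=R_NormedModule) (Kd * SB)%R _ EA). }
  assert (ExOut' : ex_series T').
  { apply (ex_series_bound _ (fun v => (Kd * rho * SB) * cA v)%R).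
    intro v. eapply Rle_trans. apply (ExIn' v). right. ring.
    apply (ex_series_scal_l (K:=R_AbsRing) (V:=R_NormedModule) (Kd * rho * SB)%R _ EA). }
  assert (EM : ex_series (fun v => (Kd * 2 * rho ^ 2 * SB) * cA v)%R)
    by apply (ex_series_scal_l (K:=R_AbsRing) (V:=R_NormedModule) (Kd * 2 * rho ^ 2 * SB)%R _ EA).
  pose proof (series_rem T T' z r _ RemIn ExOut ExOut' EM) as RO.
  exists (CSeries T'). split.
  - apply (deriv_of_rem _ z (CSeries T') r (Series (fun v => (Kd * 2 * rho ^ 2 * SB) * cA v)%R) Hr).
    exact RO.
  - cbv beta. fold (T' ). change (fun v => CSeries (fun n => Tin al be ga de v n z)) with (fun v => T v z).
    assert (ET : ex_series (fun v => T v z)).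
    { pose proof (ExOut 0 ltac:(rewrite Cmod_0; exact Hr)) as E0.
      eapply ex_series_ext; [|exact E0]. intro v. simpl. rewrite Cplus_0_r. reflexivity. }
    rewrite <- CSeries_lin by assumption.
    set (E1 := pFq [al + 1] [de] (- / z)).
    rewrite (CSeries_ext _ (fun v => (Kc al be ga de * E1) * hyp_term [al + ga] [be] (/ z) v)).
    2:{ intro v. unfold T, T'.
        pose proof (ExIn v 0 ltac:(rewrite Cmod_0; exact Hr)) as [E0 _].
        rewrite <- CSeries_lin.
        2: apply (ExIn' v).
        2: { eapply ex_series_ext; [|exact E0]. intro n. simpl. rewrite Cplus_0_r. reflexivity. }
        rewrite (CSeries_ext _ _ (fun n => step_alg al be ga de z v n Hz Hbe)).
        rewrite CSeries_scal by (apply hyp1_ex; exact Hde).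
        fold (pFq [al + 1] [de] (- / z)). fold E1. rewrite hyp1. ring. }
    rewrite CSeries_scal by (apply hyp1_ex; exact Hbe).
    unfold MacE. fold E1. unfold pFq at 1. cbn [map prodC fold_right].
    replace (- / - z) with (/ z) by (field; exact Hz).
    unfold Kc, Cdiv. rewrite !Cinv_mult_all, !Cinv1. gen_inv. ring.
Qed.
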